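(* Let $\mathcal{K}$ be a closed convex cone in a finite-dimensional Euclidean space with $\dim\mathcal{K}>1$. Then there exists $\alpha>-1$ such that $$\sup_{y\in\mathcal{K},\ \|y\|=1}\langle x,y\rangle\ge\alpha\quad\text{for all }x\in\operatorname{span}\mathcal{K}\text{ with }\|x\|=1.$$ *)

(* Defs.v *)
From HB Require Import structures.
From mathcomp Require Import all_boot all_order all_algebra.
From mathcomp Require Import all_classical all_reals all_analysis.
Set Implicit Arguments. Unset Strict Implicit. Unset Printing Implicit Defensive.
Import Order.TTheory GRing.Theory Num.Theory.
Import numFieldNormedType.Exports.
Local Open Scope classical_set_scope.
Local Open Scope ring_scope.

Definition dotv {R : realType} {n : nat} (u v : 'rV[R]_n) : R :=
  \sum_(i < n) u 0 i * v 0 i.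
Definition enorm {R : realType} {n : nat} (u : 'rV[R]_n) : R :=
  Num.sqrt (dotv u u).

Definition is_cone {R : realType} {n : nat} (K : set 'rV[R]_n) : Prop :=
  forall x t, K x -> 0 <= t -> K (t *: x).
Definition is_convex_set {R : realType} {n : nat} (K : set 'rV[R]_n) : Prop :=
  forall x y t, K x -> K y -> 0 <= t <= 1 -> K (t *: x + (1 - t) *: y).

Definition lin_span {R : realType} {n : nat} (K : set 'rV[R]_n) : set 'rV[R]_n :=
  [set x | exists (m : nat) (k : 'I_m -> 'rV[R]_n) (c : 'I_m -> R),
      (forall i, K (k i)) /\ x = \sum_(i < m) c i *: k i].

(* dim K (:= dim span K) >= d : span K contains d linearly independent vectors *)
Definition dim_ge {R : realType} {n : nat} (K : set 'rV[R]_n) (d : nat) : Prop :=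
  exists M : 'M[R]_(d, n), (forall i, lin_span K (row i M)) /\ \rank M = d.

(* Main.v *)
Require Import Defs.
From HB Require Import structures.
From mathcomp Require Import all_boot all_order all_algebra.
From mathcomp Require Import all_classical all_reals all_analysis.
From mathcomp Require Import ring lra.
Import Order.TTheory GRing.Theory Num.Theory.
Import numFieldNormedType.Exports.
Local Open Scope classical_set_scope.
Local Open Scope ring_scope.

Section H.
Variables (R : realType) (n : nat).
Implicit Types (u v w x : 'rV[R]_n).

Lemma dotv_ge0 u : 0 <= dotv u u.
Proof. by apply: sumr_ge0 => i _; rewrite -expr2 sqr_ge0. Qed.

Lemma dotv_eq0 u : dotv u u = 0 -> u = 0.
Proof.
move=> h; apply/matrixP => i j; rewrite (ord1 i) mxE.
have hg : forall k : 'I_n, true -> 0 <= u 0 k * u 0 k.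
  by move=> k _; rewrite -expr2 sqr_ge0.
have := psumr_eq0P hg h (i:=j) isT.
by move/eqP; rewrite mulf_eq0 orbb => /eqP.
Qed.

Lemma dotvC u v : dotv u v = dotv v u.
Proof. by apply: eq_bigr => i _; rewrite mulrC. Qed.

Lemma dotvDr x u v : dotv x (u + v) = dotv x u + dotv x v.
Proof. rewrite /dotv -big_split; apply: eq_bigr => i _; rewrite mxE /=. ring. Qed.

Lemma dotvZr x t u : dotv x (t *: u) = t * dotv x u.
Proof. rewrite /dotv mulr_sumr; apply: eq_bigr => i _; rewrite mxE /=. ring. Qed.

Lemma dotvZl x t u : dotv (t *: u) x = t * dotv u x.
Proof. by rewrite dotvC dotvZr dotvC. Qed.

Lemma enorm_sqr u : enorm u ^+ 2 = dotv u u.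
Proof. by rewrite sqr_sqrtr // dotv_ge0. Qed.

Lemma enorm1 u : enorm u = 1 -> dotv u u = 1.
Proof. by move=> h; rewrite -enorm_sqr h expr1n. Qed.

Lemma enorm0 : enorm (0 : 'rV[R]_n) = 0.
Proof. by rewrite /enorm /dotv big1 ?sqrtr0 // => i _; rewrite mxE mul0r. Qed.

Lemma normalize u : u != 0 ->
  let a := (enorm u)^-1 *: u in dotv a a = 1 /\ enorm a = 1 /\ u = enorm u *: a.
Proof.
move=> u0 a.
have hp : 0 < enorm u.
  rewrite sqrtr_gt0 lt_neqAle dotv_ge0 andbT eq_sym.
  by apply/negP => /eqP /dotv_eq0 h; rewrite h eqxx in u0.
have d1 : dotv a a = 1.
  rewrite /a dotvZl dotvZr -enorm_sqr; field; exact: lt0r_neq0.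
split=> //; split; first by rewrite /enorm d1 sqrtr1.
by rewrite /a scalerA divrr ?scale1r // unitfE lt0r_neq0.
Qed.

Lemma sum_bound x c : - dotv x c <= dotv x x + dotv c c / 4.
Proof.
rewrite /dotv -sumrN mulr_suml -big_split; apply: ler_sum => i _ /=.
have := sqr_ge0 (x 0 i + c 0 i / 2); rewrite -!expr2 => h; nra.
Qed.

Lemma dot_le1 x y : dotv x x = 1 -> dotv y y = 1 -> dotv x y <= 1.
Proof.
move=> hx hy.
have : dotv x y <= (dotv x x + dotv y y) / 2.
  rewrite /dotv -big_split mulr_suml; apply: ler_sum => i _ /=.
  have := sqr_ge0 (x 0 i - y 0 i); rewrite -!expr2 => h; nra.
by rewrite hx hy; lra.
Qed.

Lemma parallelogram (a b : 'rV[R]_n) : dotv (a + b) (a + b) + dotv (a - b) (a - b) =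
   2 * dotv a a + 2 * dotv b b.
Proof.
rewrite /dotv -big_split !mulr_sumr -big_split; apply: eq_bigr => i _.
rewrite !mxE /=; ring.
Qed.

End H.
Arguments dotv_ge0 {R n}. Arguments dotv_eq0 {R n}. Arguments dotvDr {R n}.
Arguments enorm1 {R n}. Arguments normalize {R n}. Arguments sum_bound {R n}. Arguments dot_le1 {R n}. Arguments parallelogram {R n}.

Lemma two_units (R : realType) (n : nat) (K : set 'rV[R]_n) :
  is_cone K -> dim_ge K 2 ->
  exists a b, [/\ K a, K b, enorm a = 1, enorm b = 1 & a != b].
Proof.
move=> Kcone [M [Mrow Mrk]].
apply: contrapT => notwo.
have [a Ha] : exists a, forall u, K u -> u = enorm u *: a.
  case: (pselect (exists a, K a /\ enorm a = 1)) => [[a [Ka a1]]|none].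
  - exists a => u Ku; case: (eqVneq u 0) => [->|u0]; first by rewrite enorm0 scale0r.
    have [d1 [e1 ue]] := normalize _ u0.
    have Ka' : K ((enorm u)^-1 *: u).
      apply: Kcone => //; rewrite invr_ge0; exact: sqrtr_ge0.
    case: (eqVneq ((enorm u)^-1 *: u) a) => [e|ne]; first by rewrite {1}ue e.
    by exfalso; apply: notwo; exists ((enorm u)^-1 *: u), a.
  - exists 0 => u Ku; case: (eqVneq u 0) => [->|u0]; first by rewrite enorm0 scale0r.
    have [d1 [e1 ue]] := normalize _ u0.
    have Ka' : K ((enorm u)^-1 *: u).
      apply: Kcone => //; rewrite invr_ge0; exact: sqrtr_ge0.
    by exfalso; apply: none; exists ((enorm u)^-1 *: u).
have ht : forall i, exists t : R, row i M = t *: a.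
  move=> i; have [m [k [c [Kk ->]]]] := Mrow i.
  exists (\sum_(j < m) c j * enorm (k j)).
  rewrite scaler_suml; apply: eq_bigr => j _.
  by rewrite {1}(Ha _ (Kk j)) scalerA.
have [t tE] := choice ht.
have eM : M = (\col_i t i) *m a.
  apply/matrixP => i j; rewrite !mxE big_ord1 !mxE.
  have := congr1 (fun r : 'rV[R]_n => r 0 j) (tE i); rewrite !mxE /= => ->.
  by [].
have : (\rank M <= 1)%N.
  rewrite eM; apply: leq_trans (mxrankM_maxr _ _) _; exact: rank_leq_row.
by rewrite Mrk.
Qed.

Theorem proposition4p3 (R : realType) (n : nat) (K : set 'rV[R]_n)
  (Kclosed : closed K) (Kcone : is_cone K) (Kconv : is_convex_set K)
  (Kdim : dim_ge K 2) :
  exists alpha : R, -1 < alpha /\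
    forall x : 'rV[R]_n, lin_span K x -> enorm x = 1 ->
      alpha <= sup [set dotv x y | y in [set y | K y /\ enorm y = 1]].
Proof.
have [a [b [Ka Kb a1 b1 ab]]] := two_units _ _ _ Kcone Kdim.
have a1' := enorm1 _ a1; have b1' := enorm1 _ b1.
exists (-1/2 - dotv (a + b) (a + b) / 8); split.
  have hp := parallelogram a b.
  have hd : 0 < dotv (a - b) (a - b).
    rewrite lt_neqAle dotv_ge0 andbT eq_sym; apply/negP => /eqP /dotv_eq0 /eqP.
    by rewrite subr_eq0 (negbTE ab).
  rewrite a1' b1' in hp; lra.
move=> x _ x1; have x1' := enorm1 _ x1.
set E := [set dotv x y | y in _].
have ubE : has_ubound E.
  by exists 1 => _ [y [Ky y1] <-]; apply: dot_le1 => //; apply: enorm1.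
have ha : dotv x a <= sup E by apply: ub_le_sup => //; exists a.
have hb : dotv x b <= sup E by apply: ub_le_sup => //; exists b.
have := sum_bound x (a + b); rewrite dotvDr x1'; lra.
Qed.
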